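(* Let $R$ be a blind bisimulation on the nodes of a $\lambda$-graph $G$ and let $Q$ be a binary relation with $Q\subseteq R$. Let $n,m$ be nodes with $n\,Q\,m$, and $\tau$ a trace such that the path $n\xrightarrow{\tau}$ crosses an abstraction node $l$ and the path $m\xrightarrow{\tau}$ crosses an abstraction node $l'$. If $l\,R\,l'$ then $l\,Q^{\Downarrow}\,l'$.
   Context: A pre-$\lambda$-graph is a directed graph whose nodes are of four kinds: an application node $@(n_1,n_2)$ has exactly two children, its left child $n_1$ and its right child $n_2$; an abstraction node $\lambda(n)$ has exactly one child, its body $n$; a free variable node has no children and carries an atom $\mathrm{id}(n)$ from a fixed set of atoms, distinct free variable nodes carrying distinct atoms; a bound variable node $\mathrm{var}(l)$ has exactly one outgoing binding edge, to an abstraction node $l$ (its binder). A trace is a finite sequence of directions from $\{\swarrow,\downarrow,\searrow\}$; $\epsilon$ is the empty trace and $d\cdot\tau$ is the trace $\tau$ extended by one final step $d$. Paths $n\xrightarrow{\tau}m$ are defined inductively: $n\xrightarrow{\epsilon}n$; if $n\xrightarrow{\tau}\lambda(m)$ then $n\xrightarrow{\downarrow\cdot\tau}m$; if $n\xrightarrow{\tau}@(m_1,m_2)$ then $n\xrightarrow{\swarrow\cdot\tau}m_1$ and $n\xrightarrow{\searrow\cdot\tau}m_2$ (binding edges are never followed). We write $n\xrightarrow{\tau}$ if $n\xrightarrow{\tau}m$ for some $m$. The path $n\xrightarrow{\tau}$ crosses a node $m$ if either $n\xrightarrow{\tau}m$, or $\tau=d\cdot\tau'$ and $n\xrightarrow{\tau'}$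 crosses $m$. A root is a node $r$ such that the only path ending in $r$ has the empty trace. A node $m$ dominates $n$ if every path from a root to $n$ crosses $m$. A $\lambda$-graph is a pre-$\lambda$-graph that has finitely many nodes, is acyclic ($n\xrightarrow{\tau}n$ holds only for $\tau=\epsilon$), and is dominated (every bound variable node $\mathrm{var}(l)$ is dominated by its binder $l$). Two nodes are homogeneous if both are application nodes, or both abstraction nodes, or both free variable nodes, or both bound variable nodes; a binary relation $R$ on nodes is homogeneous if it only relates homogeneous nodes. Rules: $(\swarrow)$: $@(n_1,n_2)\,R\,@(m_1,m_2)$ implies $n_1\,R\,m_1$; $(\searrow)$: $@(n_1,n_2)\,R\,@(m_1,m_2)$ implies $n_2\,R\,m_2$; $(\downarrow)$: $\lambda(n)\,R\,\lambda(m)$ implies $n\,R\,m$. $R$ is propagated if closed under $(\swarrow),(\downarrow),(\searrow)$. A blind bisimulation is a homogeneous propagated relation. $R^{\Downarrow}$ (propagation) is the smallest propagated relation containing $R$. *)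

(* Defs.v *)
From Stdlib Require Import List.
Import ListNotations.
Set Implicit Arguments.

(* The kind of a node together with its outgoing edges. A = the fixed set of atoms. *)
Inductive node (A V : Type) : Type :=
| App (n1 n2 : V)
| Abs (b : V)
| FV (a : A)
| BV (l : V).       (* bound variable var(l), binding edge to l *)
Arguments App {A V}. Arguments Abs {A V}. Arguments FV {A V}. Arguments BV {A V}.

(* Directions: swarrow, downarrow, searrow *)
Inductive dir : Type := DL | DD | DR.

(* Traces: [d :: t] is the trace t extended by ONE FINAL step d (i.e. d . t). *)
Definition trace := list dir.

Section LG.
Context {A V : Type} (g : V -> node A V).

Definition is_abs (l : V) : Prop := exists b, g l = Abs b.

Definition pre_lambda_graph : Prop :=
  (forall n l, g n = BV l -> is_abs l) /\
  (forall n1 n2 a, g n1 = FV a -> g n2 = FV a -> n1 = n2).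

(* paths n --t--> m (binding edges never followed) *)
Inductive path : V -> trace -> V -> Prop :=
| path_nil n : path n [] n
| path_down n t m b : path n t m -> g m = Abs b -> path n (DD :: t) b
| path_left n t m m1 m2 : path n t m -> g m = App m1 m2 -> path n (DL :: t) m1
| path_right n t m m1 m2 : path n t m -> g m = App m1 m2 -> path n (DR :: t) m2.

Inductive crosses : V -> trace -> V -> Prop :=
| crosses_end n t m : path n t m -> crosses n t m
| crosses_prefix n d t m : crosses n t m -> crosses n (d :: t) m.

Definition is_root (r : V) : Prop := forall n t, path n t r -> t = [].

Definition dominates (m n : V) : Prop :=
  forall r t, is_root r -> path r t n -> crosses r t m.

Definition finite_nodes : Prop := exists s : list V, forall v, In v s.

Definition acyclic : Prop := forall n t, path n t n -> t = [].

Definition dominated : Prop := forall n l, g n = BV l -> dominates l n.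

Definition lambda_graph : Prop :=
  pre_lambda_graph /\ finite_nodes /\ acyclic /\ dominated.

Definition homogeneous_nodes (x y : V) : Prop :=
  match g x, g y with
  | App _ _, App _ _ | Abs _, Abs _ | FV _, FV _ | BV _, BV _ => True
  | _, _ => False
  end.

Definition homogeneous (R : V -> V -> Prop) : Prop :=
  forall x y, R x y -> homogeneous_nodes x y.

Definition propagated (R : V -> V -> Prop) : Prop :=
  (forall x y x1 x2 y1 y2, R x y -> g x = App x1 x2 -> g y = App y1 y2 -> R x1 y1) /\
  (forall x y x1 x2 y1 y2, R x y -> g x = App x1 x2 -> g y = App y1 y2 -> R x2 y2) /\
  (forall x y bx b_y, R x y -> g x = Abs bx -> g y = Abs b_y -> R bx b_y).

Definition blind_bisimulation (R : V -> V -> Prop) : Prop :=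
  homogeneous R /\ propagated R.

(* Q^{Downarrow}: the smallest propagated relation containing Q *)
Inductive propagation (Q : V -> V -> Prop) : V -> V -> Prop :=
| prop_base x y : Q x y -> propagation Q x y
| prop_left x y x1 x2 y1 y2 : propagation Q x y -> g x = App x1 x2 -> g y = App y1 y2 ->
    propagation Q x1 y1
| prop_right x y x1 x2 y1 y2 : propagation Q x y -> g x = App x1 x2 -> g y = App y1 y2 ->
    propagation Q x2 y2
| prop_down x y bx b_y : propagation Q x y -> g x = Abs bx -> g y = Abs b_y ->
    propagation Q bx b_y.

End LG.

(* Main.v *)
Require Import Defs.
From Stdlib Require Import List ClassicalEpsilon Lia.
Import ListNotations.

Lemma path_det A V (g : V -> node A V) n t k1 :
  path g n t k1 -> forall k2, path g n t k2 -> k1 = k2.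
Proof.
  induction 1; intros k2 H2; inversion H2; subst; auto;
  match goal with
  | IH : forall k, path g ?n ?t k -> _ = k, Hp : path g ?n ?t ?z |- _ => specialize (IH _ Hp); subst
  end; congruence.
Qed.

Lemma path_app A V (g : V -> node A V) b w c :
  path g b w c -> forall a s, path g a s b -> path g a (w ++ s) c.
Proof.
  induction 1; intros a0 s0 Hs0; simpl; auto; econstructor; eauto.
Qed.

Lemma path_split A V (g : V -> node A V) p : forall s a b,
  path g a (p ++ s) b -> exists c, path g a s c /\ path g c p b.
Proof.
  induction p as [|d p IH]; intros s a b H; simpl in *.
  - exists b; split; auto; constructor.
  - inversion H; subst;
    match goal with Hp : path g a (p ++ s) ?z |- _ =>
      destruct (IH _ _ _ Hp) as [c [H1 H2]] end;
    exists c; split; auto; econstructor; eauto.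
Qed.

Lemma crosses_suffix A V (g : V -> node A V) n t l :
  crosses g n t l -> exists p s, t = p ++ s /\ path g n s l.
Proof.
  induction 1.
  - exists [], t; auto.
  - destruct IHcrosses as [p [s [-> Hs]]]. exists (d :: p), s; auto.
Qed.

Lemma suffix_cmp (X : Type) (p1 : list X) : forall p2 s1 s2, p1 ++ s1 = p2 ++ s2 ->
  s1 = s2 \/ (exists q, q <> [] /\ s2 = q ++ s1) \/ (exists q, q <> [] /\ s1 = q ++ s2).
Proof.
  induction p1 as [|x p1 IH]; intros p2 s1 s2 H; simpl in *.
  - destruct p2 as [|y p2]; simpl in *; auto.
    right; right; exists (y :: p2); split; auto; discriminate.
  - destruct p2 as [|y p2]; simpl in *.
    + right; left; exists (x :: p1); split; auto; discriminate.
    + inversion H; subst; eauto.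
Qed.

Lemma hom_sym A V (g : V -> node A V) x y :
  homogeneous_nodes g x y -> homogeneous_nodes g y x.
Proof. unfold homogeneous_nodes; destruct (g x), (g y); auto. Qed.

Lemma transfer A V (g : V -> node A V) R :
  blind_bisimulation g R -> forall a w a', path g a w a' -> forall b, R a b ->
  exists b', path g b w b' /\ R a' b'.
Proof.
  intros [Hh [Hl [Hr Hd]]]. induction 1; intros b0 Hab.
  - exists b0; split; auto; constructor.
  - destruct (IHpath _ Hab) as [b' [Hp HR]].
    pose proof (Hh _ _ HR) as Hn; unfold homogeneous_nodes in Hn.
    rewrite H0 in Hn. destruct (g b') eqn:E; try contradiction.
    exists b1; split; [econstructor; eauto | eauto].
  - destruct (IHpath _ Hab) as [b' [Hp HR]].
    pose proof (Hh _ _ HR) as Hn; unfold homogeneous_nodes in Hn.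
    rewrite H0 in Hn. destruct (g b') eqn:E; try contradiction.
    exists n1; split; [econstructor; eauto | eauto].
  - destruct (IHpath _ Hab) as [b' [Hp HR]].
    pose proof (Hh _ _ HR) as Hn; unfold homogeneous_nodes in Hn.
    rewrite H0 in Hn. destruct (g b') eqn:E; try contradiction.
    exists n2; split; [econstructor; eauto | eauto].
Qed.

Lemma bisim_flip A V (g : V -> node A V) R :
  blind_bisimulation g R -> blind_bisimulation g (fun x y => R y x).
Proof.
  intros [Hh [Hl [Hr Hd]]]; repeat split; intros; eauto.
  intros x y Hxy; apply hom_sym; auto.
Qed.

Lemma transfer_rev A V (g : V -> node A V) R :
  blind_bisimulation g R -> forall b w b', path g b w b' -> forall a, R a b ->
  exists a', path g a w a' /\ R a' b'.
Proof.
  intros HB b w b' Hp a Hab.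
  destruct (transfer _ _ g _ (bisim_flip _ _ g R HB) _ _ _ Hp a Hab) as [x [H1 H2]]; exists x; auto.
Qed.

Lemma prop_sub A V (g : V -> node A V) R Q :
  blind_bisimulation g R -> (forall x y, Q x y -> R x y) ->
  forall x y, propagation g Q x y -> R x y.
Proof.
  intros [Hh [Hl [Hr Hd]]] HQ. induction 1; eauto.
Qed.

Lemma along A V (g : V -> node A V) Q n m :
  Q n m -> forall s x, path g n s x -> forall y, path g m s y -> propagation g Q x y.
Proof.
  intros HQ s x. induction 1; intros y Hy; inversion Hy; subst.
  - constructor; auto.
  - eapply prop_down; eauto.
  - eapply prop_left; eauto.
  - eapply prop_right; eauto.
Qed.
Definition decb (P : Prop) : bool :=
  if excluded_middle_informative P then true else false.

Lemma decb_true P : decb P = true <-> P.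
Proof. unfold decb; destruct (excluded_middle_informative P); split; auto; discriminate. Qed.

Lemma filter_le (X : Type) (p q : X -> bool) s :
  (forall x, In x s -> p x = true -> q x = true) ->
  length (filter p s) <= length (filter q s).
Proof.
  induction s as [|y s IH]; intros H; simpl; auto.
  assert (IH' : length (filter p s) <= length (filter q s)) by (apply IH; intros; apply H; simpl; auto).
  destruct (p y) eqn:E1; destruct (q y) eqn:E2; simpl; try lia.
  rewrite (H y (or_introl eq_refl) E1) in E2; discriminate.
Qed.

Lemma filter_lt (X : Type) (p q : X -> bool) s z :
  (forall x, In x s -> p x = true -> q x = true) -> In z s -> q z = true -> p z = false ->
  length (filter p s) < length (filter q s).
Proof.
  induction s as [|y s IH]; intros H Hz Hq Hp; simpl in *; [contradiction|].
  destruct Hz as [<-|Hz].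
  - rewrite Hq, Hp; simpl.
    assert (length (filter p s) <= length (filter q s)) by (apply filter_le; intros; apply H; auto). lia.
  - assert (IH' : length (filter p s) < length (filter q s)) by (apply IH; auto).
    destruct (p y) eqn:E1; destruct (q y) eqn:E2; simpl; try lia.
    rewrite (H y (or_introl eq_refl) E1) in E2; discriminate.
Qed.

Definition reach A V (g : V -> node A V) v u := exists w, w <> [] /\ path g v w u.

Lemma filter_length_le (X : Type) (p : X -> bool) s : length (filter p s) <= length s.
Proof. induction s; simpl; auto; destruct (p a); simpl; lia. Qed.

Lemma path_bound A V (g : V -> node A V) :
  @finite_nodes V -> acyclic g -> exists B, forall v w u, path g v w u -> length w <= B.
Proof.
  intros [s Hs] Hac.
  set (c := fun v => length (filter (fun u => decb (reach A V g v u)) s)).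
  assert (Hstep : forall u d u', path g u [d] u' -> c u' < c u).
  { intros u d u' Hp. unfold c. apply filter_lt with (z := u'); auto.
    - intros x _ Hx. rewrite decb_true in Hx |- *. unfold reach in *.
      destruct Hx as [w [Hw Hpw]]. exists (w ++ [d]); split.
      + destruct w; simpl; discriminate.
      + eapply path_app; eauto.
    - rewrite decb_true. unfold reach. exists [d]; split; auto; discriminate.
    - unfold decb, reach; destruct (excluded_middle_informative _) as [[w [Hw Hpw]]|]; auto.
      exfalso; apply Hw; eapply Hac; eauto. }
  assert (Hind : forall v w u, path g v w u -> c u + length w <= c v).
  { induction 1; simpl; try lia.
    - assert (c b < c m) by (eapply Hstep; econstructor; [constructor|eauto]). lia.
    - assert (c m1 < c m) by (eapply Hstep; eapply path_left; [constructor|eauto]). lia.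
    - assert (c m2 < c m) by (eapply Hstep; eapply path_right; [constructor|eauto]). lia. }
  exists (length s). intros v w u Hp. pose proof (Hind _ _ _ Hp).
  assert (c v <= length s) by apply filter_length_le. lia.
Qed.

Lemma unbounded A V (g : V -> node A V) b c q :
  (forall w u, path g b w u -> exists u', path g c w u') -> path g b q c -> q <> [] ->
  forall L, exists w u, path g b w u /\ L <= length w.
Proof.
  intros HT Hq Hne. induction L as [|L IH].
  - exists [], b; split; [constructor|simpl; lia].
  - destruct IH as [w [u [Hp HL]]]. destruct (HT _ _ Hp) as [u' Hu'].
    exists (w ++ q), u'; split.
    + eapply path_app; eauto.
    + rewrite length_app. destruct q; [contradiction|simpl; lia].
Qed.

Arguments path_det {A V g n t k1} _ {k2} _.
Arguments path_split {A V g} p s a b _.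
Arguments crosses_suffix {A V g n t l} _.
Arguments transfer {A V g R} _ {a w a'} _ {b} _.
Arguments transfer_rev {A V g R} _ {b w b'} _ {a} _.
Arguments unbounded {A V g b c q} _ _ _ L.
Arguments path_bound {A V} g _ _.

Theorem mainTheorem8 (A V : Type) (g : V -> node A V) (R Q : V -> V -> Prop)
  (n m l l' : V) (t : trace) :
  lambda_graph g ->
  blind_bisimulation g R ->
  (forall x y, Q x y -> R x y) ->
  Q n m ->
  (exists k, path g n t k) ->
  (exists k, path g m t k) ->
  crosses g n t l -> is_abs g l ->
  crosses g m t l' -> is_abs g l' ->
  R l l' ->
  propagation g Q l l'.
Proof.
  intros [_ [Hfin [Hac _]]] HB HQR HQ [kn Hkn] [km Hkm] Hc1 _ Hc2 _ HR.
  destruct (path_bound g Hfin Hac) as [B HBd].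
  destruct (crosses_suffix Hc1) as [p1 [s1 [E1 H1]]].
  destruct (crosses_suffix Hc2) as [p2 [s2 [E2 H2]]].
  assert (Hcmp := suffix_cmp _ p1 p2 s1 s2 ltac:(congruence)).
  destruct Hcmp as [<-|[[q [Hq ->]]|[q [Hq ->]]]].
  - eapply along; eauto.
  -
    rewrite E1 in Hkm. destruct (path_split _ _ _ _ Hkm) as [y [Hy _]].
    destruct (path_split _ _ _ _ H2) as [y' [Hy' Hyl]].
    rewrite (path_det Hy' Hy) in Hyl.
    assert (HRly : R l y) by (eapply prop_sub; eauto; eapply along; eauto).
    exfalso.
    assert (HT : forall w u, path g y w u -> exists u', path g l' w u').
    { intros w u Hp.
      destruct (transfer_rev HB Hp HRly) as [a' [Ha' _]].
      destruct (transfer HB Ha' HR) as [c' [Hc' _]]. eauto. }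
    destruct (unbounded HT Hyl Hq (S B)) as [w [u [Hp HL]]].
    specialize (HBd _ _ _ Hp). lia.
  - rewrite E2 in Hkn. destruct (path_split _ _ _ _ Hkn) as [x [Hx _]].
    destruct (path_split _ _ _ _ H1) as [x' [Hx' Hxl]].
    rewrite (path_det Hx' Hx) in Hxl.
    assert (HRxl : R x l') by (eapply prop_sub; eauto; eapply along; eauto).
    exfalso.
    assert (HT : forall w u, path g x w u -> exists u', path g l w u').
    { intros w u Hp.
      destruct (transfer HB Hp HRxl) as [a' [Ha' _]].
      destruct (transfer_rev HB Ha' HR) as [c' [Hc' _]]. eauto. }
    destruct (unbounded HT Hxl Hq (S B)) as [w [u [Hp HL]]].
    specialize (HBd _ _ _ Hp). lia.
Qed.
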